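(* Let $X$ be a locally connected compact metrizable group, let $T$ be a minimal rotation of $X$, let $G$ be a locally compact second countable group, $f\colon X\to G$ continuous, $H$ a closed subgroup of $G$, and let $y\mapsto H_y$ be a consistent selection of subgroups in the essential ranges of $f$. Let $U\subseteq G$ be open and $C\subseteq G$ compact. Then for every fixed integer $n$ the sets $\{y\in X: f(n,y)H_y\cap UH_y\neq\varnothing\}$ and $\{y\in X: f(n,y)H_y\cap CH_y=\varnothing\}$ are open in $X$.
   Context: The cocycle is $f(n,x)=f(T^{n-1}x)\cdots f(x)$ for $n\ge1$, $f(0,x)=\mathbf 1_G$, $f(n,x)=f(-n,T^nx)^{-1}$ for $n<0$. $E_x(f)$ is the set of $g\in G$ such that for every open neighbourhood $V$ of $g$ and every open neighbourhood $\mathcal O$ of $x$ there is $m\neq0$ with $T^{-m}\mathcal O\cap\mathcal O\cap\{y:f(m,y)\in V\}\neq\varnothing$. $H^G=\{gHg^{-1}:g\in G\}$, topologised via the bijection with $G/N(H)$, $N(H)=\{g:gHg^{-1}=H\}$. A consistent selection of subgroups in the essential ranges of $f$ is a continuous map $y\mapsto H_y$ from $X$ into $H^G$ such that $H_x\subseteq E_x(f)$ and $H_{T^mx}=f(m,x)H_xf(m,x)^{-1}$ for all $x\in X$, $m\in\mathbb Z$. *)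

(* Defs.v *)
From HB Require Import structures.
From mathcomp Require Import all_boot all_order all_algebra.
From mathcomp Require Import all_classical all_reals all_analysis.
From mathcomp Require Import Rstruct.
Set Implicit Arguments. Unset Strict Implicit. Unset Printing Implicit Defensive.
Import Order.TTheory GRing.Theory Num.Theory.
Local Open Scope classical_set_scope.
Local Open Scope ring_scope.

Definition is_topgroup (G : topologicalType) (mul : G -> G -> G)
    (inv : G -> G) (one : G) : Prop :=
  [/\ (forall x y z, mul x (mul y z) = mul (mul x y) z),
      (forall x, mul one x = x) /\ (forall x, mul x one = x),
      (forall x, mul (inv x) x = one) /\ (forall x, mul x (inv x) = one),
      continuous (fun p : G * G => mul p.1 p.2)
    & continuous inv].

Definition metrizable (T : topologicalType) : Prop :=
  exists d : T -> T -> Rdefinitions.R,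
  [/\ (forall x y, 0 <= d x y), (forall x y, d x y = 0 <-> x = y),
      (forall x y, d x y = d y x),
      (forall x y z, d x z <= d x y + d y z)
    & (forall A : set T, open A <->
        (forall x, A x -> exists2 e, 0 < e & [set y | d x y < e] `<=` A))].

Definition locally_connected (T : topologicalType) : Prop :=
  forall (x : T) (U : set T), nbhs x U ->
    exists V : set T, [/\ open V, connected V, V x & V `<=` U].

Definition Tpow (X : Type) (T Tinv : X -> X) (n : int) (x : X) : X :=
  match n with
  | Posz k => iter k T x
  | Negz k => iter k.+1 Tinv x
  end.

Fixpoint cocN (X G : Type) (mul : G -> G -> G) (one : G) (T : X -> X)
    (f : X -> G) (k : nat) (x : X) : G :=
  match k with
  | 0 => one
  | k.+1 => mul (f (iter k T x)) (cocN mul one T f k x)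
  end.

(* The cocycle f(n,x), n : int; for n < 0, f(n,x) = f(-n, T^n x)^{-1}. *)
Definition cocycle (X G : Type) (mul : G -> G -> G) (inv : G -> G) (one : G)
    (T Tinv : X -> X) (f : X -> G) (n : int) (x : X) : G :=
  match n with
  | Posz k => cocN mul one T f k x
  | Negz k => inv (cocN mul one T f k.+1 (Tpow T Tinv n x))
  end.

Definition ess_range (X G : topologicalType) (mul : G -> G -> G)
    (inv : G -> G) (one : G) (T Tinv : X -> X) (f : X -> G) (x : X) : set G :=
  [set g | forall (V : set G) (O : set X), open V -> V g -> open O -> O x ->
     exists m : int, m != 0 /\
       exists y, [/\ O (Tpow T Tinv m y), O y &
                     V (cocycle mul inv one T Tinv f m y)]].

Definition conjset (G : Type) (mul : G -> G -> G) (inv : G -> G)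
    (g : G) (K : set G) : set G :=
  [set z | exists2 h, K h & z = mul (mul g h) (inv g)].

Definition normalizer (G : Type) (mul : G -> G -> G) (inv : G -> G)
    (H : set G) : set G :=
  [set g | conjset mul inv g H = H].

Definition lcoset (G : Type) (mul : G -> G -> G) (g : G) (K : set G) : set G :=
  [set z | exists2 k, K k & z = mul g k].

Definition setmul (G : Type) (mul : G -> G -> G) (A K : set G) : set G :=
  [set z | exists u k, [/\ A u, K k & z = mul u k]].

Definition is_subgroup (G : Type) (mul : G -> G -> G) (inv : G -> G)
    (one : G) (H : set G) : Prop :=
  [/\ H one, (forall x y, H x -> H y -> H (mul x y))
    & (forall x, H x -> H (inv x))].

(* Continuity of y |-> H_y from X into H^G, where H^G carries the topology
   transported from the quotient G/N(H) via gN(H) |-> gHg^{-1}.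
   Open sets of G/N(H) are the images of open sets W of G which are
   saturated (W N(H) = W); the corresponding open set of H^G is
   {gHg^{-1} : g in W}. *)
Definition conj_continuous (X G : topologicalType) (mul : G -> G -> G)
    (inv : G -> G) (H : set G) (Hs : X -> set G) : Prop :=
  forall W : set G, open W ->
    (forall g n, W g -> normalizer mul inv H n -> W (mul g n)) ->
    open [set y | exists2 g, W g & Hs y = conjset mul inv g H].

Definition consistent_selection (X G : topologicalType) (mul : G -> G -> G)
    (inv : G -> G) (one : G) (T Tinv : X -> X) (f : X -> G) (H : set G)
    (Hs : X -> set G) : Prop :=
  [/\ (forall y, exists g, Hs y = conjset mul inv g H),
      conj_continuous mul inv H Hs,
      (forall x, Hs x `<=` ess_range mul inv one T Tinv f x)
    & (forall x (m : int), Hs (Tpow T Tinv m x) =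
         conjset mul inv (cocycle mul inv one T Tinv f m x) (Hs x))].

Definition minimal_map (X : topologicalType) (T Tinv : X -> X) : Prop :=
  forall (x : X) (O : set X), open O -> O !=set0 ->
    exists n : int, O (Tpow T Tinv n x).

(* Main.v *)
Require Import Defs.
From HB Require Import structures.
From mathcomp Require Import all_boot all_order all_algebra.
From mathcomp Require Import all_classical all_reals all_analysis.
Import Order.TTheory GRing.Theory Num.Theory.
Local Open Scope classical_set_scope.
Set Implicit Arguments. Unset Strict Implicit.
Section GroupAlg.
Variables (G : Type) (mul : G -> G -> G) (inv : G -> G) (one : G).
Hypothesis mA : forall x y z, mul x (mul y z) = mul (mul x y) z.
Hypothesis m1l : forall x, mul one x = x.
Hypothesis m1r : forall x, mul x one = x.
Hypothesis mVl : forall x, mul (inv x) x = one.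
Hypothesis mVr : forall x, mul x (inv x) = one.

Lemma gKl a b : mul (inv a) (mul a b) = b.
Proof. by rewrite mA mVl m1l. Qed.
Lemma gKVl a b : mul a (mul (inv a) b) = b.
Proof. by rewrite mA mVr m1l. Qed.
Lemma gKr a b : mul (mul b a) (inv a) = b.
Proof. by rewrite -mA mVr m1r. Qed.
Lemma gKVr a b : mul (mul b (inv a)) a = b.
Proof. by rewrite -mA mVl m1r. Qed.
Lemma gcancr a b c : mul a c = mul b c -> a = b.
Proof. by move=> e; rewrite -(gKr c a) e gKr. Qed.
Lemma ginvM a b : inv (mul a b) = mul (inv b) (inv a).
Proof.
apply: (@gcancr _ _ (mul a b)); rewrite mVl mA -(mA (inv b)) mVl m1r mVl //.
Qed.
Lemma ginv1 : inv one = one.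
Proof. by rewrite -{2}(mVl one) m1r. Qed.

Lemma conjsetM a b K : conjset mul inv (mul a b) K = conjset mul inv a (conjset mul inv b K).
Proof.
apply/seteqP; split => z /=.
  case=> h Kh ->; exists (mul (mul b h) (inv b)); first by exists h.
  by rewrite ginvM !mA.
case=> w [h Kh ->] ->; exists h => //.
by rewrite ginvM !mA.
Qed.

Lemma conjset1 K : conjset mul inv one K = K.
Proof.
apply/seteqP; split => z /=.
  by case=> h Kh ->; rewrite ginv1 m1l m1r.
by move=> Kz; exists z => //; rewrite ginv1 m1l m1r.
Qed.

Lemma normM H m n : normalizer mul inv H m -> normalizer mul inv H n ->
  normalizer mul inv H (mul m n).
Proof. by rewrite /normalizer /= => e1 e2; rewrite conjsetM e2 e1. Qed.

Lemma normV H m : normalizer mul inv H m -> normalizer mul inv H (inv m).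
Proof.
rewrite /normalizer /= => e.
by rewrite -{1}e -conjsetM mVl conjset1.
Qed.

Lemma normConj H g m : normalizer mul inv H m ->
  conjset mul inv (mul g m) H = conjset mul inv g H.
Proof. by rewrite /normalizer /= => e; rewrite conjsetM e. Qed.

End GroupAlg.
Lemma cont_mul2 (Y G : topologicalType) (mul : G -> G -> G) (F K : Y -> G) :
  continuous (fun p : G * G => mul p.1 p.2) -> continuous F -> continuous K ->
  continuous (fun y => mul (F y) (K y)).
Proof.
move=> hm hF hK y.
apply: (@continuous2_cvg _ _ _ _ _ _ F K mul (F y) (K y)); [|exact: hF|exact: hK].
exact: (hm (F y, K y)).
Qed.

Lemma cont_comp (Y Z W : topologicalType) (g : Z -> W) (F : Y -> Z) :
  continuous g -> continuous F -> continuous (fun y => g (F y)).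
Proof. by move=> hg hF y; apply: continuous_comp; [exact: hF|exact: hg]. Qed.

Lemma cont_fst (Y Z : topologicalType) : continuous (fun p : Y * Z => p.1).
Proof. by move=> p; apply: cvg_fst. Qed.
Lemma cont_snd (Y Z : topologicalType) : continuous (fun p : Y * Z => p.2).
Proof. by move=> p; apply: cvg_snd. Qed.

Lemma cont_iter (Y : topologicalType) (T : Y -> Y) k :
  continuous T -> continuous (iter k T).
Proof.
move=> hT; elim: k => [|k IH] /=; first by move=> y.
exact: (cont_comp hT IH).
Qed.

Lemma cont_cocycle (X G : topologicalType) (mul : G -> G -> G) (inv : G -> G)
  (one : G) (T Tinv : X -> X) (f : X -> G) n :
  continuous (fun p : G * G => mul p.1 p.2) -> continuous inv ->
  continuous T -> continuous Tinv -> continuous f ->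
  continuous (cocycle mul inv one T Tinv f n).
Proof.
move=> hm hi hT hTi hf.
have hN : forall k, continuous (cocN mul one T f k).
  elim=> [|k IH] /=; first exact: cst_continuous.
  apply: cont_mul2 => //; exact: (cont_comp hf (cont_iter (k:=k) hT)).
case: n => j /=; first exact: hN.
apply: cont_comp => //; apply: cont_comp; first exact: hN.
exact: cont_iter.
Qed.

Lemma W_open (G : topologicalType) (mul : G -> G -> G) (inv : G -> G) (one : G)
  (H : set G) (V : set G) :
  continuous (fun p : G * G => mul p.1 p.2) -> open V ->
  open [set g | exists2 m, normalizer mul inv H m & V (mul g m)].
Proof.
move=> hm Vo; rewrite openE => g [m Nm Vgm].
have c : continuous (fun x => mul x m).
  by apply: (@cont_mul2 G G mul id (fun=> m)) => //; [move=> x|exact: cst_continuous].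
have : nbhs (mul g m) V by apply: open_nbhs_nbhs.
move=> hV; have hn : nbhs g [set x | V (mul x m)] by exact: c g _ hV.
move: hn; apply: filterS => x Vx; by exists m.
Qed.

Theorem lemma4p2
  (X : topologicalType) (mulX : X -> X -> X) (invX : X -> X) (oneX : X)
  (G : topologicalType) (mul : G -> G -> G) (inv : G -> G) (one : G)
  (a : X) (f : X -> G) (H : set G) (Hs : X -> set G)
  (U C : set G) (n : int) :
  is_topgroup mulX invX oneX ->
  compact [set: X] -> hausdorff_space X -> metrizable X ->
  locally_connected X ->
  minimal_map (fun x => mulX a x) (fun x => mulX (invX a) x) ->
  is_topgroup mul inv one -> hausdorff_space G ->
  locally_compact [set: G] -> @second_countable G ->
  continuous f ->
  is_subgroup mul inv one H -> closed H ->
  consistent_selection mul inv one (fun x => mulX a x)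
    (fun x => mulX (invX a) x) f H Hs ->
  open U -> compact C ->
  open [set y | exists z,
          lcoset mul (cocycle mul inv one (fun x => mulX a x)
                        (fun x => mulX (invX a) x) f n y) (Hs y) z
          /\ setmul mul U (Hs y) z] /\
  open [set y | ~ exists z,
          lcoset mul (cocycle mul inv one (fun x => mulX a x)
                        (fun x => mulX (invX a) x) f n y) (Hs y) z
          /\ setmul mul C (Hs y) z].
Proof.
move=> [_ _ _ hmX _] _ _ _ _ _ [mA [m1l m1r] [mVl mVr] hm hi] _ _ _ hf
  [H1 HM HV] Hcl [Hex Hcc _ _] Uo Cc.
have gKr_ := gKr mA m1r mVr. have gKVr_ := gKVr mA m1r mVl.
have gKVl_ := gKVl mA m1l mVr. have normM_ := normM mA m1r mVl mVr.
have normV_ := normV mA m1l m1r mVl mVr. have normConj_ := normConj mA m1r mVl mVr.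
have conjset1_ := conjset1 m1l m1r mVl.
set cyc := cocycle mul inv one _ _ f n.
have hcyc : continuous cyc.
  apply: cont_cocycle => //.
    by apply: (@cont_mul2 X X mulX (fun=> a) id) => //; [exact: cst_continuous|move=> x].
  by apply: (@cont_mul2 X X mulX (fun=> invX a) id) => //; [exact: cst_continuous|move=> x].
have Ws : forall V g m, [set g | exists2 m, normalizer mul inv H m & V (mul g m)] g ->
    normalizer mul inv H m ->
    [set g | exists2 m, normalizer mul inv H m & V (mul g m)] (mul g m).
  move=> V g m [m' Nm' Vgm'] Nm; exists (mul (inv m) m').
    by apply: normM_ => //; apply: normV_.
  by rewrite mA gKr_.
have W0 : forall V g0, V g0 -> [set g | exists2 m, normalizer mul inv H m & V (mul g m)] g0.
  move=> V g0 Vg0; exists one; last by rewrite m1r.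
  by rewrite /normalizer /= conjset1_.
split.
- rewrite openE => y0 [z [[h1 Hh1 ez1] [u [h2 [Uu Hh2 ez2]]]]].
  have [g0 eg0] := Hex y0.
  rewrite eg0 in Hh1 Hh2.
  case: Hh1 => k1 Hk1 eh1; case: Hh2 => k2 Hk2 eh2.
  pose kk := mul k1 (inv k2).
  pose Phi := fun p : G * G => mul p.1 (mul (mul p.2 kk) (inv p.2)).
  have cPhi : continuous Phi.
    apply: cont_mul2 => //; first exact: cont_fst.
    apply: cont_mul2 => //.
      apply: cont_mul2 => //; [exact: cont_snd|exact: cst_continuous].
    exact: (cont_comp hi (cont_snd (Y:=G) (Z:=G))).
  have ePhi : Phi (cyc y0, g0) = u.
    have e0 : mul (mul (mul (cyc y0) g0) k1) (inv g0) =
              mul (mul (mul u g0) k2) (inv g0).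
      have : mul (cyc y0) h1 = mul u h2 by rewrite -ez1 -ez2.
      by rewrite eh1 eh2 !mA.
    have e : mul (mul (cyc y0) g0) k1 = mul (mul u g0) k2.
      by have := congr1 (fun t => mul t g0) e0; rewrite /= !gKVr_.
    by rewrite /Phi /= /kk !mA e gKr_ gKr_.
  have : nbhs (cyc y0, g0) (Phi @^-1` U).
    by apply: cPhi; apply: open_nbhs_nbhs; split => //; rewrite ePhi.
  case=> [[A B]] /= [nA nB] sAB.
  pose W := [set g | exists2 m, normalizer mul inv H m & B° (mul g m)].
  have Wo : open W by apply: W_open => //; exact: open_interior.
  have S1o := Hcc W Wo (Ws _).
  have nS1 : nbhs y0 [set y | exists2 g, W g & Hs y = conjset mul inv g H].
    apply: open_nbhs_nbhs; split => //; exists g0 => //.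
    by apply: W0; apply: nbhs_singleton; apply: nbhs_interior.
  have nA' : nbhs y0 (cyc @^-1` A) by apply: hcyc.
  apply: filterS (filterI nS1 nA') => y [[g [m Nm Vgm] eHy] Ay].
  have eHv : Hs y = conjset mul inv (mul g m) H by rewrite eHy normConj_.
  have Uphi : U (Phi (cyc y, mul g m)).
    by apply: (sAB (cyc y, mul g m)); split => //; apply: interior_subset.
  exists (Phi (cyc y, mul g m)); split.
    exists (mul (mul (mul g m) kk) (inv (mul g m))) => //.
    by rewrite eHv; exists kk => //; apply: HM => //; apply: HV.
  exists (Phi (cyc y, mul g m)), one; split => //.
  by rewrite eHv; exists one => //; rewrite m1r mVr.
- rewrite openE => y0 Hn.
  have [g0 eg0] := Hex y0.
  pose Psi := fun (p : G * G) (c : G) => mul (inv p.1) (mul (inv p.2) (mul c p.1)).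
  have key : forall c, C c -> ~ H (Psi (g0, cyc y0) c).
    move=> c Cc0 HPsi; apply: Hn; exists c; split.
      exists (mul (mul g0 (Psi (g0, cyc y0) c)) (inv g0)).
        by rewrite eg0; exists (Psi (g0, cyc y0) c).
      by rewrite /Psi /= !mA gKr_ gKr_ mVr m1l.
    exists c, one; split => //.
    by rewrite eg0; exists one => //; rewrite m1r mVr.
  have nc : \forall i \near (g0, cyc y0), C `<=` (fun c => ~ H (Psi i c)).
    apply: ((proj1 (compact_near_coveringP C) Cc) (G * G)%type (nbhs (g0, cyc y0))
       (fun i c => ~ H (Psi i c)) _) => c Cc'.
    have cQ : continuous (fun q : G * (G * G) => Psi q.2 q.1).
      rewrite /Psi /=.
      apply: (@cont_mul2 _ G mul (fun q : G * (G * G) => inv q.2.1)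
        (fun q => mul (inv q.2.2) (mul q.1 q.2.1))) => //.
        exact: (cont_comp hi (cont_comp (cont_fst (Y:=G) (Z:=G)) (cont_snd (Y:=G) (Z:=(G * G)%type)))).
      apply: (@cont_mul2 _ G mul (fun q : G * (G * G) => inv q.2.2)
        (fun q => mul q.1 q.2.1)) => //.
        exact: (cont_comp hi (cont_comp (cont_snd (Y:=G) (Z:=G)) (cont_snd (Y:=G) (Z:=(G * G)%type)))).
      apply: (@cont_mul2 _ G mul (fun q : G * (G * G) => q.1)
        (fun q => q.2.1)) => //; first exact: cont_fst.
      exact: (cont_comp (cont_fst (Y:=G) (Z:=G)) (cont_snd (Y:=G) (Z:=(G * G)%type))).
    have : nbhs (c, (g0, cyc y0)) ((fun q : G * (G * G) => Psi q.2 q.1) @^-1` (~` H)).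
      apply: cQ; apply: open_nbhs_nbhs; split; [exact: closed_openC|exact: key].
    exact.
  case: nc => [[B D]] /= [nB nD] sBD.
  pose W := [set g | exists2 m, normalizer mul inv H m & B° (mul g m)].
  have Wo : open W by apply: W_open => //; exact: open_interior.
  have S1o := Hcc W Wo (Ws _).
  have nS1 : nbhs y0 [set y | exists2 g, W g & Hs y = conjset mul inv g H].
    apply: open_nbhs_nbhs; split => //; exists g0 => //.
    by apply: W0; apply: nbhs_singleton; apply: nbhs_interior.
  have nD' : nbhs y0 (cyc @^-1` D) by apply: hcyc.
  apply: filterS (filterI nS1 nD') => y [[g [m Nm Vgm] eHy] Dy].
  move=> [z [[h1 Hh1 ez1] [c [h2 [Ccc Hh2 ez2]]]]].
  have eHv : Hs y = conjset mul inv (mul g m) H by rewrite eHy normConj_.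
  rewrite eHv in Hh1 Hh2.
  case: Hh1 => k1 Hk1 eh1; case: Hh2 => k2 Hk2 eh2.
  set v := mul g m in eh1 eh2 Vgm; clearbody v.
  apply: (sBD (v, cyc y) _ c Ccc).
    by split => //; apply: interior_subset.
  have e0 : mul (mul (mul (cyc y) v) k1) (inv v) =
            mul (mul (mul c v) k2) (inv v).
    have : mul (cyc y) h1 = mul c h2 by rewrite -ez1 -ez2.
    by rewrite eh1 eh2 !mA.
  have e : mul (mul (cyc y) v) k1 = mul (mul c v) k2.
    by have := congr1 (fun t => mul t v) e0; rewrite /= !gKVr_.
  have ecv : mul c v = mul (mul (mul (cyc y) v) k1) (inv k2) by rewrite e gKr_.
  rewrite /Psi /= ecv -!mA (gKl mA m1l mVl) (gKl mA m1l mVl).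
  by apply: HM => //; apply: HV.
Qed.
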